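(* For every function $g_1:\mathbb{N}\to\mathbb{N}$ there exists a function $g_2:\mathbb{N}\to\mathbb{N}$ with $g_2\ge g_1$ such that the following holds. Let $H=(V,E)$ be a graph of cutwidth $\mathrm{cw}(H)$, let $F\subseteq V$ be a set of initially burned vertices with $|F|\le g_1(\mathrm{cw}(H))$, and let the budget be any $b\ge 1$. Then there is a protection strategy for the firefighter process on $H$ started from the burned set $F$ such that at most $g_2(\mathrm{cw}(H))$ vertices are burned at the end of the process.
   Context: Firefighter process with initial burned set $F$: at step $t=0$ all vertices of $F$ are burned. At every step $t>0$: (1) protection phase: at most $b$ vertices not yet burned become protected; (2) spreading phase: every unprotected vertex adjacent to a burned vertex becomes burned. Burned and protected vertices stay so; the process stops when no new vertex can become burned. The cutwidth $\mathrm{cw}(G)$ of a graph $G$ on $n$ vertices is the minimum $k$ such that there is an ordering $v_1,\dots,v_n$ of its vertices with at most $k$ edges between $\{v_1,\dots,v_i\}$ and $\{v_{i+1},\dots,v_n\}$ for every $i\in\{1,\dots,n-1\}$. *)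

(* Defs.v *)
From mathcomp Require Import all_boot all_fingroup.
Set Implicit Arguments. Unset Strict Implicit. Unset Printing Implicit Defensive.

Section Graphs.
Variables (T : finType) (e : rel T).

(* A (finite simple) graph is a symmetric irreflexive relation e on a finType T.
   A vertex ordering v_1,...,v_n is given by a permutation p of T:
   the sequence [seq p x | x <- enum T]. *)
Definition vorder (p : {perm T}) : seq T := [seq p x | x <- enum T].

(* number of edges between the first i vertices and the rest
   (each edge counted once, as the ordered pair (left end, right end)) *)
Definition cut_size (p : {perm T}) (i : nat) : nat :=
  #|[set uv : T * T | [&& e uv.1 uv.2, uv.1 \in take i (vorder p)
                        & uv.2 \in drop i (vorder p)]]|.

Definition order_width (p : {perm T}) : nat :=
  \max_(i < #|T|) cut_size p i.

Definition cutwidth : nat :=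
  \big[minn/order_width 1%g]_(p : {perm T}) order_width p.

(* Firefighter process. A strategy P gives, for each step t > 0, the set P t
   of vertices protected at step t. State at time t: (burned, protected). *)
Fixpoint ff_state (F : {set T}) (P : nat -> {set T}) (t : nat)
  : {set T} * {set T} :=
  match t with
  | 0 => (F, set0)
  | t'.+1 =>
      let st := ff_state F P t' in
      let Pr := st.2 :|: P t'.+1 in
      (st.1 :|: [set v | (v \notin Pr) && [exists u in st.1, e u v]], Pr)
  end.

Definition burned (F : {set T}) (P : nat -> {set T}) (t : nat) : {set T} :=
  (ff_state F P t).1.

Definition valid_strategy (F : {set T}) (b : nat) (P : nat -> {set T}) : Prop :=
  forall t, P t.+1 \subset ~: burned F P t /\ #|P t.+1| <= b.

End Graphs.

(* Main.v *)
Require Import Defs.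
From mathcomp Require Import all_boot all_fingroup.
Set Implicit Arguments. Unset Strict Implicit. Unset Printing Implicit Defensive.

Section Basics.
Variable T : finType.

Definition pos (p : {perm T}) (v : T) := index v (vorder p).

Lemma mem_vorder (p : {perm T}) (v : T) : v \in vorder p.
Proof.
rewrite /vorder; have -> : v = p (p^-1 v)%g by rewrite permKV.
by apply: map_f; rewrite mem_enum.
Qed.

Lemma uniq_vorder (p : {perm T}) : uniq (vorder p).
Proof. by rewrite /vorder map_inj_uniq ?enum_uniq //; apply: perm_inj. Qed.

Lemma pos_inj (p : {perm T}) : injective (pos p).
Proof. move=> u v H; rewrite -(nth_index u (mem_vorder p u)); rewrite /pos in H; by rewrite H nth_index // mem_vorder. Qed.

Lemma in_take_pos (p : {perm T}) (v : T) i : (v \in take i (vorder p)) = (pos p v < i).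
Proof. by rewrite in_take // mem_vorder. Qed.

Lemma in_drop_pos (p : {perm T}) (v : T) i : (v \in drop i (vorder p)) = (i <= pos p v).
Proof.
have U := uniq_vorder p; rewrite -(cat_take_drop i (vorder p)) cat_uniq in U.
case/and3P: U => _ /hasPn H _.
have Hm := mem_vorder p v; rewrite -(cat_take_drop i (vorder p)) mem_cat in_take_pos in Hm.
case: (ltnP (pos p v) i) => Hl.
  by apply/negP => Hd; have := H v Hd; rewrite /= in_take_pos Hl.
by rewrite ltnNge Hl /= in Hm.
Qed.

Definition crossing (e : rel T) (p : {perm T}) i :=
  [set uv : T * T | [&& e uv.1 uv.2, pos p uv.1 < i & i <= pos p uv.2]].

Lemma cut_sizeE (e : rel T) (p : {perm T}) i : cut_size e p i = #|crossing e p i|.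
Proof.
rewrite /cut_size /crossing; apply: eq_card => uv.
by rewrite !inE in_take_pos in_drop_pos.
Qed.

Lemma pos_lt (p : {perm T}) (v : T) : pos p v < #|T|.
Proof.
by rewrite /pos cardE -(size_map p (enum T)) index_mem mem_vorder.
Qed.

Lemma cut_le_width (e : rel T) (p : {perm T}) i : cut_size e p i <= order_width e p.
Proof.
case: (ltnP i #|T|) => Hi.
  by rewrite /order_width; have := leq_bigmax (F := fun j : 'I_#|T| => cut_size e p j) (Ordinal Hi).
rewrite cut_sizeE (_ : crossing e p i = set0) ?cards0 //.
apply/setP => uv; rewrite !inE; apply/negP => /and3P[_ _ H].
by have := leq_ltn_trans H (pos_lt p uv.2); rewrite ltnNge Hi.
Qed.

Lemma cutwidth_attained (e : rel T) : exists p, cutwidth e = order_width e p.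
Proof.
rewrite /cutwidth.
apply: (big_ind (fun v => exists p, v = order_width e p)).
- by exists 1%g.
- move=> x y [p ->] [q ->]; case: (leqP (order_width e p) (order_width e q)) => H.
    by exists p.
  by exists q.
- by move=> p _; exists p.
Qed.

Lemma card_bigcup_le (I : finType) (A : {pred I}) (G : I -> {set T}) :
  #|\bigcup_(i in A) G i| <= \sum_(i in A) #|G i|.
Proof.
elim/big_rec2: _ => [|i U n _ IH]; first by rewrite cards0.
apply: leq_trans (leq_card_setU _ _) _; exact: leq_add.
Qed.

End Basics.
Set Implicit Arguments. Unset Strict Implicit. Unset Printing Implicit Defensive.

Section Process.
Variable T : finType.
Implicit Types (e : rel T) (F : {set T}) (P : nat -> {set T}).

Definition prot e F P t := (ff_state e F P t).2.

Lemma burned0 e F P : burned e F P 0 = F. Proof. by []. Qed.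
Lemma prot0 e F P : prot e F P 0 = set0. Proof. by []. Qed.
Lemma burnedS e F P t : burned e F P t.+1 = burned e F P t :|:
  [set v | (v \notin prot e F P t :|: P t.+1) && [exists u in burned e F P t, e u v]].
Proof. by []. Qed.
Lemma protS e F P t : prot e F P t.+1 = prot e F P t :|: P t.+1.
Proof. by []. Qed.

Lemma burned_step e F P t : burned e F P t \subset burned e F P t.+1.
Proof. by rewrite burnedS subsetUl. Qed.

Lemma burned_mono e F P m n : m <= n -> burned e F P m \subset burned e F P n.
Proof.
move=> /subnK <-; elim: (n - m) => [|d IH] //; rewrite addSn.
exact: subset_trans IH (burned_step _ _ _ _).
Qed.

Lemma prot_mono e F P m n : m <= n -> prot e F P m \subset prot e F P n.
Proof.
move=> /subnK <-; elim: (n - m) => [|d IH] //; rewrite addSn protS.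
exact: subset_trans IH (subsetUl _ _).
Qed.

Lemma P_prot e F P t : P t.+1 \subset prot e F P t.+1.
Proof. by rewrite protS subsetUr. Qed.

Definition nostrat : nat -> {set T} := fun _ => set0.

Lemma prot_free e F t : prot e F nostrat t = set0.
Proof. by elim: t => [|t IH] //; rewrite protS IH setU0. Qed.

Lemma freeS e F t x : (x \in burned e F nostrat t.+1) =
  (x \in burned e F nostrat t) || [exists u in burned e F nostrat t, e u x].
Proof. by rewrite burnedS prot_free setU0 !inE. Qed.

Lemma burned_free e F P t : burned e F P t \subset burned e F nostrat t.
Proof.
elim: t => [|t IH] //; apply/subsetP => x.
rewrite burnedS freeS !inE => /orP[Hx|/andP[_ /existsP[u /andP[Hu Hux]]]].
  by rewrite (subsetP IH x Hx).
by apply/orP; right; apply/existsP; exists u; rewrite (subsetP IH u Hu).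
Qed.

Lemma free_monoF e F1 F2 t : F1 \subset F2 ->
  burned e F1 nostrat t \subset burned e F2 nostrat t.
Proof.
move=> H; elim: t => [|t IH] //; apply/subsetP => x.
rewrite !freeS => /orP[Hx|/existsP[u /andP[Hu Hux]]].
  by rewrite (subsetP IH x Hx).
by apply/orP; right; apply/existsP; exists u; rewrite (subsetP IH u Hu).
Qed.

Lemma free_split e F t x : x \in burned e F nostrat t ->
  exists2 f, f \in F & x \in burned e [set f] nostrat t.
Proof.
elim: t x => [|t IH] x; first by move=> Hx; exists x; rewrite // burned0 inE.
rewrite freeS => /orP[/IH[f Hf Hx]|/existsP[u /andP[/IH[f Hf Hu] Hux]]].
  by exists f => //; rewrite freeS Hx.
by exists f => //; rewrite freeS; apply/orP; right; apply/existsP; exists u; rewrite Hu.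
Qed.

Lemma free_conn e (p : {perm T}) f t i a b : symmetric e ->
  let S := burned e [set f] nostrat t in
  a \in S -> b \in S -> pos p a < i -> i <= pos p b ->
  exists u v, [/\ u \in S, v \in S, e u v, pos p u < i & i <= pos p v].
Proof.
move=> sym; elim: t a b => [|t IH] a b /=.
  rewrite burned0 !inE => /eqP -> /eqP -> H1 H2.
  by have := leq_trans H1 H2; rewrite ltnn.
set S := burned e [set f] nostrat t.
have fS : f \in S by rewrite (subsetP (burned_mono _ _ _ (leq0n t))) // burned0 inE.
have SS : S \subset burned e [set f] nostrat t.+1 by apply: burned_step.
move=> Ha Hb Hai Hib.
case: (ltnP (pos p f) i) => Hf.
  case: (boolP [exists y in S, i <= pos p y]).
    case/existsP=> y /andP[Hy Hyi]; have [u [v [Hu Hv Huv H1 H2]]] := IH f y fS Hy Hf Hyi.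
    by exists u, v; rewrite !(subsetP SS).
  move/existsPn=> Hall.
  have Hb' : b \notin S by apply/negP => Hb'; have := Hall b; rewrite Hb' Hib.
  move: Hb; rewrite freeS -/S (negbTE Hb') /= => /existsP[u /andP[Hu Hub]].
  exists u, b; rewrite (subsetP SS u Hu) freeS -/S (negbTE Hb') /=.
  split => //; first by apply/existsP; exists u; rewrite Hu.
  by have := Hall u; rewrite Hu /= -ltnNge.
case: (boolP [exists y in S, pos p y < i]).
  case/existsP=> y /andP[Hy Hyi]; have [u [v [Hu Hv Huv H1 H2]]] := IH y f Hy fS Hyi Hf.
  by exists u, v; rewrite !(subsetP SS).
move/existsPn=> Hall.
have Ha' : a \notin S by apply/negP => Ha'; have := Hall a; rewrite Ha' Hai.
move: Ha; rewrite freeS -/S (negbTE Ha') /= => /existsP[u /andP[Hu Hua]].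
exists a, u; rewrite (subsetP SS u Hu) freeS -/S (negbTE Ha') /=.
split => //; first by apply/existsP; exists u; rewrite Hu.
  by rewrite sym.
by have := Hall u; rewrite Hu /= -leqNgt.
Qed.

Lemma degree e (p : {perm T}) w : symmetric e ->
  (forall i, cut_size e p i <= w) -> forall u, #|[set v | e u v]| <= (w + w).+1.
Proof.
move=> sym W u.
have Hsub : [set v | e u v] \subset
   u |: ((fun uv : T * T => uv.2) @: crossing e p (pos p u).+1 :|:
         (fun uv : T * T => uv.1) @: crossing e p (pos p u)).
  apply/subsetP => v; rewrite !inE => Huv.
  case: (ltngtP (pos p u) (pos p v)) => H.
  - apply/orP; right; apply/orP; left; apply/imsetP; exists (u, v) => //.
    by rewrite inE /= Huv ltnSn.
  - apply/orP; right; apply/orP; right; apply/imsetP; exists (v, u) => //.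
    by rewrite inE /= (sym v u) Huv H leqnn.
  - by rewrite (pos_inj H) eqxx.
apply: leq_trans (subset_leq_card Hsub) _.
rewrite cardsU1 -[(w + w).+1]add1n; apply: leq_add; first by case: (_ \notin _).
apply: leq_trans (leq_card_setU _ _) _; apply: leq_add.
  by apply: leq_trans (leq_imset_card _ _) _; rewrite -cut_sizeE.
by apply: leq_trans (leq_imset_card _ _) _; rewrite -cut_sizeE.
Qed.

Lemma free_card e F d : (forall u, #|[set v | e u v]| <= d) ->
  forall t, #|burned e F nostrat t| <= #|F| * d.+1 ^ t.
Proof.
move=> D; elim=> [|t IH]; first by rewrite muln1.
set S := burned e F nostrat t.
have Hsub : burned e F nostrat t.+1 \subset \bigcup_(u in S) (u |: [set v | e u v]).
  apply/subsetP => x; rewrite freeS => /orP[Hx|/existsP[u /andP[Hu Hux]]].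
    by apply/bigcupP; exists x => //; rewrite !inE eqxx.
  by apply/bigcupP; exists u => //; rewrite !inE Hux orbT.
apply: leq_trans (subset_leq_card Hsub) _.
apply: leq_trans (card_bigcup_le _ _) _.
apply: (@leq_trans (\sum_(u in S) d.+1)).
  apply: leq_sum => u _; apply: leq_trans (leq_card_setU _ _) _.
  by rewrite cards1 add1n ltnS; exact: D.
rewrite sum_nat_const expnS mulnCA.
by rewrite mulnC leq_mul2l IH orbT.
Qed.

End Process.
Set Implicit Arguments. Unset Strict Implicit. Unset Printing Implicit Defensive.

Definition Qc (c : nat) (N : nat -> nat) := forall k (T : finType) (e : rel T)
  (p : {perm T}) (F : {set T}) (b : nat), symmetric e ->
  (forall i, cut_size e p i <= c) -> #|F| <= k -> 0 < b ->
  exists P, valid_strategy e F b P /\ forall t, #|burned e F P t| <= N k.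

Section Step.
Variables (c k : nat) (T : finType) (e : rel T) (p : {perm T}) (F : {set T}) (b : nat).
Hypotheses (sym : symmetric e) (W : forall i, cut_size e p i <= c.+1)
  (HF : #|F| <= k) (Hb : 0 < b).

Local Notation ps := (pos p).
Definition r := k * (4 * c.+1).
Definition B := burned e F (@nostrat T) r.
Definition Ball f := burned e [set f] (@nostrat T) r.

Lemma f_Ball f : f \in Ball f.
Proof. by rewrite (subsetP (burned_mono _ _ _ (leq0n r))) // burned0 inE. Qed.

Definition amin f := [arg min_(a < f in Ball f) ps a].
Definition amax f := [arg max_(a > f in Ball f) ps a].

Lemma amin_in f : amin f \in Ball f.
Proof. by rewrite /amin; case: arg_minnP => //; apply: f_Ball. Qed.
Lemma amin_le f a : a \in Ball f -> ps (amin f) <= ps a.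
Proof. by rewrite /amin; case: arg_minnP => [|m _ H]; [apply: f_Ball | apply: H]. Qed.
Lemma amax_in f : amax f \in Ball f.
Proof. by rewrite /amax; case: arg_maxnP => //; apply: f_Ball. Qed.
Lemma amax_ge f a : a \in Ball f -> ps a <= ps (amax f).
Proof. by rewrite /amax; case: arg_maxnP => [|m _ H]; [apply: f_Ball | apply: H]. Qed.

Definition inR v := [exists f in F, (ps (amin f) <= ps v) && (ps v <= ps (amax f))].
Definition crossR f u v := (ps u <= ps (amax f)) && (ps (amax f) < ps v).
Definition crossL f u v := (ps u < ps (amin f)) && (ps (amin f) <= ps v).
Definition S0 := [set w | (w \notin B) && [exists f in F, exists z,
   e w z && [|| crossR f w z, crossR f z w, crossL f w z | crossL f z w]]].
Definition e' : rel T := fun u v =>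
  [&& e u v, (u \notin S0) && (v \notin S0), ~~ ((u \in B) && (v \in B)) & inR u && inR v].

Lemma Ball_B f : f \in F -> Ball f \subset B.
Proof. by move=> Hf; apply: free_monoF; rewrite sub1set. Qed.

Lemma B_R v : v \in B -> inR v.
Proof.
case/free_split => f Hf Hv; apply/existsP; exists f.
by rewrite Hf amin_le // amax_ge.
Qed.

Lemma S0_B v : v \in S0 -> v \notin B.
Proof. by rewrite inE => /andP[]. Qed.

Lemma confine u v : inR u -> e u v -> ~~ inR v -> v \in S0.
Proof.
move=> Hu Huv Hv.
have HvB : v \notin B by apply: contra Hv; apply: B_R.
case/existsP: Hu => f /and3P[Hf H1 H2].
move/existsPn: Hv => /(_ f); rewrite Hf /= negb_and -!ltnNge => Hn.
rewrite inE HvB /=; apply/existsP; exists f; rewrite Hf /=; apply/existsP; exists u.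
rewrite (sym v u) Huv /=.
case/orP: Hn => Hn.
  by rewrite /crossL Hn H1 !orbT.
by rewrite /crossR H2 Hn !orbT.
Qed.

Lemma e'_sym : symmetric e'.
Proof.
move=> u v; rewrite /e' (sym u v); congr [&& _, _, _ & _].
- by rewrite andbC.
- by rewrite andbC.
- by rewrite andbC.
Qed.

Lemma e'_width i : cut_size e' p i <= c.
Proof.
rewrite cut_sizeE.
case: (boolP [exists f in F, (ps (amin f) < i) && (i <= ps (amax f))]).
  case/existsP => f /and3P[Hf H1 H2].
  have [u [v [Hu Hv Huv Hui Hiv]]] :=
    free_conn (p := p) (f := f) (t := r) sym (amin_in f) (amax_in f) H1 H2.
  have sub : crossing e' p i \proper crossing e p i.
    apply/properP; split.
      by apply/subsetP => [[x y]]; rewrite !inE /= => /andP[/andP[-> _] ->].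
    exists (u, v); first by rewrite inE /= Huv Hui Hiv.
    rewrite inE /= /e' Hui Hiv /= andbT.
    by rewrite (subsetP (Ball_B Hf) u Hu) (subsetP (Ball_B Hf) v Hv) /= !andbF.
  by rewrite -ltnS (leq_trans (proper_card sub)) // -cut_sizeE.
move/existsPn => Hn.
rewrite (_ : crossing e' p i = set0) ?cards0 //.
apply/setP => [[u v]]; rewrite !inE /=; apply/negP => /and3P[He' Hui Hiv].
case/and4P: He' => Huv /andP[Hu0 Hv0] HB /andP[Ru Rv].
case/existsP: Ru => f /and3P[Hf H1 H2].
move: (Hn f); rewrite Hf /= (leq_ltn_trans H1 Hui) /= -ltnNge => Hmax.
have Hc : crossR f u v by rewrite /crossR H2 (leq_trans Hmax Hiv).
case/nandP: HB => HnB.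
  move: Hu0; rewrite inE HnB /=; apply/negP; rewrite negbK.
  apply/existsP; exists f; rewrite Hf /=; apply/existsP; exists v.
  by rewrite Huv Hc.
move: Hv0; rewrite inE HnB /=; apply/negP; rewrite negbK.
apply/existsP; exists f; rewrite Hf /=; apply/existsP; exists u.
by rewrite (sym v u) Huv Hc orbT.
Qed.

Lemma S0_card : #|S0| <= r.
Proof.
pose C1 f := crossing e p (ps (amax f)).+1.
pose C2 f := crossing e p (ps (amin f)).
pose E f := ((fun uv : T * T => uv.1) @: C1 f :|: (fun uv : T * T => uv.2) @: C1 f) :|:
            ((fun uv : T * T => uv.1) @: C2 f :|: (fun uv : T * T => uv.2) @: C2 f).
have Hsub : S0 \subset \bigcup_(f in F) E f.
  apply/subsetP => w; rewrite inE => /andP[_ /existsP[f /andP[Hf /existsP[z /andP[Hwz Hc]]]]].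
  apply/bigcupP; exists f => //; rewrite !inE.
  case/or4P: Hc => /andP[H1 H2].
  - apply/orP; left; apply/orP; left; apply/imsetP; exists (w, z) => //.
    by rewrite inE /= Hwz ltnS H1 H2.
  - apply/orP; left; apply/orP; right; apply/imsetP; exists (z, w) => //.
    by rewrite inE /= (sym z w) Hwz ltnS H1 H2.
  - apply/orP; right; apply/orP; left; apply/imsetP; exists (w, z) => //.
    by rewrite inE /= Hwz H1 H2.
  - apply/orP; right; apply/orP; right; apply/imsetP; exists (z, w) => //.
    by rewrite inE /= (sym z w) Hwz H1 H2.
apply: leq_trans (subset_leq_card Hsub) _.
apply: leq_trans (card_bigcup_le _ _) _.
apply: (@leq_trans (\sum_(f in F) 4 * c.+1)).
  apply: leq_sum => f _.
  have hC1 : #|C1 f| <= c.+1 by rewrite -cut_sizeE.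
  have hC2 : #|C2 f| <= c.+1 by rewrite -cut_sizeE.
  have -> : 4 * c.+1 = (c.+1 + c.+1) + (c.+1 + c.+1) by rewrite !mulSn mul0n addn0 !addnA.
  apply: leq_trans (leq_card_setU _ _) _; apply: leq_add;
  (apply: leq_trans (leq_card_setU _ _) _; apply: leq_add;
   apply: leq_trans (leq_imset_card _ _) _; assumption).
by rewrite sum_nat_const /r leq_mul2r HF orbT.
Qed.

Definition K := k * ((c.+1 + c.+1).+2) ^ r.

Lemma B_card : #|B| <= K.
Proof.
have D := degree sym W.
by apply: leq_trans (free_card F D r) _; rewrite leq_mul2r HF orbT.
Qed.

Section Strat.
Variable P' : nat -> {set T}.
Hypothesis HP' : valid_strategy e' B b P'.

Definition Pact (n : nat) : {set T} :=
  if n <= r then [set x in S0 | index x (enum S0) == n.-1] else P' (n - r).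

Lemma Pact_late t : Pact (r + t.+1) = P' t.+1.
Proof.
rewrite /Pact ifF ?addKn //; apply/negbTE; rewrite -ltnNge.
by rewrite -{1}(addn0 r) ltn_add2l.
Qed.

Lemma burned_B n : n <= r -> burned e F Pact n \subset B.
Proof.
move=> Hn; apply: subset_trans (burned_free _ _ _ _) _; exact: burned_mono.
Qed.

Lemma S0_prot n : r <= n -> S0 \subset prot e F Pact n.
Proof.
move=> Hn; apply/subsetP => x Hx.
have Hxs : x \in enum S0 by rewrite mem_enum.
have Hj : (index x (enum S0)).+1 <= r.
  by apply: leq_trans (S0_card); rewrite cardE index_mem.
apply: (subsetP (prot_mono _ _ _ (leq_trans Hj Hn))).
apply: (subsetP (P_prot _ _ _ _)).
by rewrite /Pact Hj inE Hx /=.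
Qed.

Lemma inv n : burned e F Pact n \subset [set v | inR v && (v \notin S0)].
Proof.
elim: n => [|n IH].
  apply/subsetP => v Hv; have HvB : v \in B by apply: (subsetP (burned_B (leq0n r))).
  by rewrite inE B_R //=; apply: contraL HvB; apply: S0_B.
apply/subsetP => v Hv.
case: (leqP n.+1 r) => Hnr.
  have HvB : v \in B by apply: (subsetP (burned_B Hnr)).
  by rewrite inE B_R //=; apply: contraL HvB; apply: S0_B.
move: Hv; rewrite burnedS in_setU => /orP[Hv|]; first exact: (subsetP IH).
rewrite inE => /andP[Hnp /existsP[u /andP[Hu Huv]]].
have HvS : v \notin S0.
  apply: contra Hnp => HS; rewrite -protS; exact: (subsetP (S0_prot (ltnW Hnr))).
rewrite inE HvS andbT.
have := subsetP IH u Hu; rewrite inE => /andP[Ru _].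
case: (boolP (inR v)) => // Rv.
by move: HvS; rewrite (confine Ru Huv Rv).
Qed.

Definition V t := burned e' B P' t.

Lemma domin t : burned e F Pact (r + t) \subset V t /\ prot e' B P' t \subset prot e F Pact (r + t).
Proof.
elim: t => [|t [IH1 IH2]].
  by rewrite addn0; split; [apply: burned_B | rewrite prot0 sub0set].
split; last first.
  rewrite addnS !protS -addnS Pact_late; exact: setSU.
apply/subsetP => v; rewrite {1}addnS => Hv; have Hv' := Hv.
move: Hv; rewrite burnedS in_setU => /orP[/(subsetP IH1) H|].
  exact: (subsetP (burned_step _ _ _ _)).
rewrite inE => /andP[Hnp /existsP[u /andP[Hu Huv]]].
case: (boolP (v \in V t)) => HvV; first exact: (subsetP (burned_step _ _ _ _)).
rewrite /V burnedS in_setU inE; apply/orP; right; apply/andP; split.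
  apply: contra Hnp; rewrite !inE => /orP[H|H].
    by rewrite (subsetP IH2 v H).
  by rewrite -addnS Pact_late H orbT.
apply/existsP; exists u; rewrite (subsetP IH1 u Hu) /=.
have := subsetP (inv _) u Hu; rewrite inE => /andP[Ru Su].
have := subsetP (inv _) v Hv'; rewrite inE => /andP[Rv Sv].
rewrite /e' Huv Su Sv Ru Rv /= andbT.
apply/negP => /andP[_ HvB]; move: HvV; apply/negP; rewrite negbK.
by apply: (subsetP (burned_mono _ _ _ (leq0n t))); rewrite burned0.
Qed.

Lemma Pact_valid : valid_strategy e F b Pact.
Proof.
move=> t; case: (leqP t.+1 r) => Ht.
  split.
    apply/subsetP => x; rewrite /Pact Ht inE => /andP[Hx _].
    rewrite inE; move: (S0_B Hx); apply: contra => Hb'.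
    exact: (subsetP (burned_B (ltnW Ht))) x Hb'.
  rewrite /Pact Ht; apply: leq_trans Hb; apply/card_le1_eqP => x y.
  rewrite !inE => /andP[Hx /eqP Ix] /andP[Hy /eqP Iy].
  have Hxs : x \in enum S0 by rewrite mem_enum inE.
  have Hys : y \in enum S0 by rewrite mem_enum inE.
  by rewrite -(nth_index x Hys) Iy -Ix nth_index.
have [t' Et] : exists t', t = r + t' by exists (t - r); rewrite subnKC.
rewrite Et -addnS Pact_late.
have [H1 H2] := HP' t'.
split => //; apply: subset_trans H1 _; rewrite setCS; exact: (domin t').1.
Qed.

End Strat.

End Step.
Set Implicit Arguments. Unset Strict Implicit. Unset Printing Implicit Defensive.

Lemma Q0 : Qc 0 id.
Proof.
move=> k T e p F b sym W HF Hb; exists (@nostrat T); split.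
  by move=> t; rewrite /nostrat sub0set cards0.
have E : forall u v, e u v -> v = u.
  move=> u v Huv; apply/eqP; apply/negPn/negP => Hne.
  case: (ltngtP (pos p u) (pos p v)) => H.
  - have := W (pos p v); rewrite cut_sizeE leqn0 => /eqP/cards0_eq/setP/(_ (u, v)).
    by rewrite !inE /= Huv H leqnn.
  - have := W (pos p u); rewrite cut_sizeE leqn0 => /eqP/cards0_eq/setP/(_ (v, u)).
    by rewrite !inE /= (sym v u) Huv H leqnn.
  - by move: Hne; rewrite (pos_inj H) eqxx.
suff S : forall t, burned e F (@nostrat T) t \subset F.
  by move=> t; apply: leq_trans (subset_leq_card (S t)) HF.
elim=> [|t IH] //; apply/subsetP => x; rewrite freeS => /orP[/(subsetP IH) //|].
by case/existsP => u /andP[Hu /E ->]; apply: (subsetP IH).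
Qed.

Definition Nstep (c : nat) (N : nat -> nat) (k : nat) := maxn (K c k) (N (K c k)).

Lemma Qstep c N : Qc c N -> Qc c.+1 (Nstep c N).
Proof.
move=> IH k T e p F b sym W HF Hb.
have [P' [HP' Hbd]] := IH (K c k) T (e' c k e p F) p (B c k e F) b
  (@e'_sym c k T e p F sym) (@e'_width c k T e p F sym W) (@B_card c k T e p F sym W HF) Hb.
exists (Pact c k e p F P'); split; first exact: (@Pact_valid c k T e p F b sym W HF Hb P' HP').
move=> n; case: (leqP n (r c k)) => Hn.
  apply: leq_trans (subset_leq_card (@burned_B c k T e p F P' n Hn)) _.
  by apply: leq_trans (@B_card c k T e p F sym W HF) _; rewrite leq_maxl.
have [t Et] : exists t, n = r c k + t by exists (n - r c k); rewrite subnKC // ltnW.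
rewrite Et; apply: leq_trans (subset_leq_card (@domin c k T e p F sym W HF P' t).1) _.
by apply: leq_trans (Hbd t) _; rewrite leq_maxr.
Qed.

Fixpoint Nb (c : nat) : nat -> nat :=
  match c with 0 => id | c'.+1 => Nstep c' (Nb c') end.

Lemma Q_all c : Qc c (Nb c).
Proof. elim: c => [|c IH]; [exact: Q0 | exact: Qstep]. Qed.

Theorem mainTheorem5 :
  forall g1 : nat -> nat,
  exists g2 : nat -> nat,
    (forall n, g1 n <= g2 n) /\
    forall (T : finType) (e : rel T),
      symmetric e -> irreflexive e ->
      forall (F : {set T}) (b : nat),
        #|F| <= g1 (cutwidth e) -> 1 <= b ->
        exists P : nat -> {set T},
          valid_strategy e F b P /\
          forall t, #|burned e F P t| <= g2 (cutwidth e).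
Proof.
move=> g1; exists (fun n => maxn (g1 n) (Nb n (g1 n))); split.
  by move=> n; rewrite leq_maxl.
move=> T e sym _ F b HF Hb.
have [p Hp] := cutwidth_attained e.
have W : forall i, cut_size e p i <= cutwidth e by move=> i; rewrite Hp cut_le_width.
have [P [HP Hbd]] := @Q_all (cutwidth e) (g1 (cutwidth e)) T e p F b sym W HF Hb.
by exists P; split => // t; apply: leq_trans (Hbd t) _; rewrite leq_maxr.
Qed.
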